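(* In the 3-body problem in ${\bf H}^2$ with masses $m_1,m_2,m_3>0$, let ${\bf q}_i(t)=(\rho_i\cos(\omega t+\alpha_i),\rho_i\sin(\omega t+\alpha_i), z_i)$, $i=1,2,3$, with constants $\omega\ne0$, $\alpha_i$, $\rho_i\ge0$, $z_i=(\rho_i^2+1)^{1/2}$, be an elliptic relative equilibrium in which the three bodies form an equilateral triangle (all mutual hyperbolic distances equal) at all times. Then $z_1=z_2=z_3$, i.e. the bodies move on the same circle whose plane is orthogonal to the rotation axis, and $m_1=m_2=m_3$.
   Context: The $n$-body problem in ${\bf H}^2$ (Weierstrass model): with the Lorentz inner product ${\bf a}\boxdot{\bf b}=a_xb_x+a_yb_y-a_zb_z$ on $\mathbb R^3$, ${\bf H}^2=\{(x,y,z): x^2+y^2-z^2=-1,\ z>0\}$. Bodies of masses $m_1,\dots,m_n>0$ have positions ${\bf q}_i=(x_i,y_i,z_i)\in{\bf H}^2$ and satisfy $$\ddot{\bf q}_i=\sum_{j\ne i}\frac{m_j[{\bf q}_j+({\bf q}_i\boxdot{\bf q}_j){\bf q}_i]}{[({\bf q}_i\boxdot{\bf q}_j)^2-1]^{3/2}}+(\dot{\bf q}_i\boxdot\dot{\bf q}_i){\bf q}_i,\qquad {\bf q}_i\boxdot{\bf q}_i=-1,\ \ {\bf q}_i\boxdot\dot{\bf q}_i=0,$$ $i=1,\dots,n$, defined only for collisionless configurations. The angular momentum $\sum_i m_i{\bf q}_i\boxtimes\dot{\bf q}_i$, where ${\bf a}\boxtimes{\bf b}=(a_yb_z-a_zb_y,\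 a_zb_x-a_xb_z,\ a_yb_x-a_xb_y)$, is a first integral. The hyperbolic distance is $d({\bf a},{\bf b})=\cosh^{-1}(-{\bf a}\boxdot{\bf b})$. An elliptic relative equilibrium in ${\bf H}^2$ is a solution with $x_i=\rho_i\cos(\omega t+\alpha_i)$, $y_i=\rho_i\sin(\omega t+\alpha_i)$, $z_i=(\rho_i^2+1)^{1/2}$, constants $\omega,\alpha_i,\rho_i$. *)

(* Defs.v *)
From Stdlib Require Import Reals List.
Import ListNotations.
Open Scope R_scope.

Record V3 := mkV { vx : R; vy : R; vz : R }.

Definition vadd (a b : V3) : V3 := mkV (vx a + vx b) (vy a + vy b) (vz a + vz b).
Definition vscale (c : R) (a : V3) : V3 := mkV (c * vx a) (c * vy a) (c * vz a).
Definition vzero : V3 := mkV 0 0 0.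

Definition ldot (a b : V3) : R := vx a * vx b + vy a * vy b - vz a * vz b.

(* Lorentz cross product (used for angular momentum; not needed in the statement) *)
Definition lcross (a b : V3) : V3 :=
  mkV (vy a * vz b - vz a * vy b) (vz a * vx b - vx a * vz b) (vy a * vx b - vx a * vy b).

Definition acosh (x : R) : R := ln (x + sqrt (x * x - 1)).

Definition hdist (a b : V3) : R := acosh (- ldot a b).

Definition has_deriv (f f' : R -> V3) : Prop :=
  forall t,
    derivable_pt_lim (fun s => vx (f s)) t (vx (f' t)) /\
    derivable_pt_lim (fun s => vy (f s)) t (vy (f' t)) /\
    derivable_pt_lim (fun s => vz (f s)) t (vz (f' t)).

Definition force (n : nat) (m : nat -> R) (q : nat -> V3) (i : nat) : V3 :=
  fold_right vadd vzero
    (map (fun j =>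
            if Nat.eq_dec j i then vzero
            else vscale (m j / Rpower (ldot (q i) (q j) ^ 2 - 1) (3/2))
                        (vadd (q j) (vscale (ldot (q i) (q j)) (q i))))
         (seq 0 n)).

(* q is a (collisionless, globally defined) solution of the n-body problem in H^2 *)
Definition nbody_solution (n : nat) (m : nat -> R) (q : nat -> R -> V3) : Prop :=
  exists v a : nat -> R -> V3,
    (forall i, (i < n)%nat -> has_deriv (q i) (v i) /\ has_deriv (v i) (a i)) /\
    (forall t i, (i < n)%nat ->
       ldot (q i t) (q i t) = -1 /\ vz (q i t) > 0 /\ ldot (q i t) (v i t) = 0) /\
    (forall t i j, (i < n)%nat -> (j < n)%nat -> i <> j ->
       ldot (q i t) (q j t) ^ 2 - 1 > 0) /\
    (forall t i, (i < n)%nat ->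
       a i t = vadd (force n m (fun k => q k t) i)
                    (vscale (ldot (v i t) (v i t)) (q i t))).

Definition ere_pos (omega : R) (alpha rho : nat -> R) (i : nat) (t : R) : V3 :=
  mkV (rho i * cos (omega * t + alpha i))
      (rho i * sin (omega * t + alpha i))
      (sqrt (rho i ^ 2 + 1)).

(* Main.v *)
Require Import Defs.
From Stdlib Require Import Reals Lra Psatz Lia.
Open Scope R_scope.

Lemma dlin om a t : derivable_pt_lim (fun s => om*s+a) t om.
Proof.
  assert (H : derivable_pt_lim (mult_real_fct om id + fct_cte a) t (om*1+0)).
  { apply derivable_pt_lim_plus.
    - apply derivable_pt_lim_scal, derivable_pt_lim_id.
    - apply derivable_pt_lim_const. }
  replace (om*1+0) with om in H by ring. exact H.
Qed.

Lemma dcos r om a t : derivable_pt_lim (fun s => r * cos(om*s+a)) t (r * (-sin(om*t+a)*om)).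
Proof.
  apply (derivable_pt_lim_scal (comp cos (fun s => om*s+a))).
  apply derivable_pt_lim_comp. apply dlin. apply derivable_pt_lim_cos.
Qed.

Lemma dsin r om a t : derivable_pt_lim (fun s => r * sin(om*s+a)) t (r * (cos(om*t+a)*om)).
Proof.
  apply (derivable_pt_lim_scal (comp sin (fun s => om*s+a))).
  apply derivable_pt_lim_comp. apply dlin. apply derivable_pt_lim_sin.
Qed.

Lemma dconst r t : derivable_pt_lim (fun _ => r) t 0.
Proof. apply (derivable_pt_lim_const r). Qed.

Lemma V3_eta (u : V3) : u = mkV (vx u) (vy u) (vz u).
Proof. destruct u; reflexivity. Qed.

Lemma ere_vel om al rh i vv :
  has_deriv (ere_pos om al rh i) vv ->
  forall t, vv t = mkV (rh i * (-sin(om*t+al i)*om)) (rh i * (cos(om*t+al i)*om)) 0.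
Proof.
  intros H t. destruct (H t) as [H1 [H2 H3]].
  rewrite (V3_eta (vv t)). f_equal.
  - eapply uniqueness_limite; [exact H1|]. apply dcos.
  - eapply uniqueness_limite; [exact H2|]. apply dsin.
  - eapply uniqueness_limite; [exact H3|]. apply (dconst (sqrt (rh i ^ 2 + 1))).
Qed.


Lemma ere_acc om al rh i vv aa :
  has_deriv (ere_pos om al rh i) vv -> has_deriv vv aa ->
  forall t, aa t = mkV (-(rh i*om) * (cos(om*t+al i)*om)) ((rh i*om) * (-sin(om*t+al i)*om)) 0.
Proof.
  intros Hv Ha t. pose proof (ere_vel _ _ _ _ _ Hv) as E.
  destruct (Ha t) as [H1 [H2 H3]].
  rewrite (V3_eta (aa t)). f_equal.
  - eapply uniqueness_limite; [exact H1|].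
    apply (derivable_pt_lim_ext (fun s => (-(rh i*om)) * sin(om*s+al i))).
    { intro z. rewrite E. simpl. ring. }
    apply dsin.
  - eapply uniqueness_limite; [exact H2|].
    apply (derivable_pt_lim_ext (fun s => (rh i*om) * cos(om*s+al i))).
    { intro z. rewrite E. simpl. ring. }
    apply dcos.
  - eapply uniqueness_limite; [exact H3|].
    apply (derivable_pt_lim_ext (fun s => 0)).
    { intro z. rewrite E. reflexivity. }
    apply dconst.
Qed.

Lemma caseA (x0 y0 Z0 x1 y1 Z1 x2 y2 Z2 k0 k1 k2 w c Tx Ty Tz Kt : R) :
  0 < w -> 0 < k0 -> 0 < k1 -> 0 < k2 -> c < -1 ->
  Z0^2 = x0^2 + y0^2 + 1 -> 0 < Z0 -> 0 < Z1 -> 0 < Z2 ->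
  c = x0*x1 + y0*y1 - Z0*Z1 ->
  Tz = k0*Z0 + k1*Z1 + k2*Z2 -> Kt = k0 + k1 + k2 ->
  Tx = -(w*Z0^2 + c*Kt - (c+1)*k0)*x0 ->
  Ty = -(w*Z0^2 + c*Kt - (c+1)*k0)*y0 ->
  Tx = -(w*Z1^2 + c*Kt - (c+1)*k1)*x1 ->
  Ty = -(w*Z1^2 + c*Kt - (c+1)*k1)*y1 ->
  Tz = (w - (w*Z1^2 + c*Kt - (c+1)*k1))*Z1 ->
  Tz = (w - (w*Z2^2 + c*Kt - (c+1)*k2))*Z2 ->
  (w*Z0^2 + c*Kt - (c+1)*k0) <> 0 ->
  (w*Z1^2 + c*Kt - (c+1)*k1) = 0 ->
  (w*Z2^2 + c*Kt - (c+1)*k2) = 0 -> False.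
Proof.
  intros Hw Hk0 Hk1 Hk2 Hc HZ0 HZ0p HZ1p HZ2p H01 HTz HKt Fx0 Fy0 Fx1 Fy1 Fz1 Fz2 N0 L1 L2.
  rewrite L1 in Fx1, Fy1, Fz1. rewrite L2 in Fz2.
  assert (Tx = 0) by lra. assert (Ty = 0) by lra.
  assert (x0 = 0). { assert ((w*Z0^2 + c*Kt - (c+1)*k0)*x0 = 0) by lra.
    destruct (Rmult_integral _ _ H1); [contradiction|assumption]. }
  assert (y0 = 0). { assert ((w*Z0^2 + c*Kt - (c+1)*k0)*y0 = 0) by lra.
    destruct (Rmult_integral _ _ H2); [contradiction|assumption]. }
  subst x0 y0.
  assert (Z0 = 1) by nra. subst Z0.
  assert (Z2 = Z1) by nra. subst Z2.
  assert (k2 = k1) by nra. subst k2.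
  assert (c = - Z1) by lra. subst c.
  assert (w*Z1 = k0 + 2*k1*Z1) by lra.
  assert (w*Z1^2 = k0*Z1 + 2*k1*Z1^2) by nra.
  assert (k1*(2*Z1^2 - Z1 - 1) = 0) by nra.
  assert (2*Z1^2 - Z1 - 1 = 0) by nra.
  nra.
Qed.

Lemma caseB (x0 y0 Z0 x1 y1 Z1 x2 y2 Z2 k0 k1 k2 w c Tx Ty Kt : R) :
  c < -1 ->
  Z0^2 = x0^2 + y0^2 + 1 -> Z1^2 = x1^2 + y1^2 + 1 -> 0 < Z0 -> 0 < Z1 ->
  c = x0*x1 + y0*y1 - Z0*Z1 ->
  Tx = -(w*Z0^2 + c*Kt - (c+1)*k0)*x0 ->
  Ty = -(w*Z0^2 + c*Kt - (c+1)*k0)*y0 ->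
  Tx = -(w*Z1^2 + c*Kt - (c+1)*k1)*x1 ->
  Ty = -(w*Z1^2 + c*Kt - (c+1)*k1)*y1 ->
  Tx = -(w*Z2^2 + c*Kt - (c+1)*k2)*x2 ->
  Ty = -(w*Z2^2 + c*Kt - (c+1)*k2)*y2 ->
  (w*Z0^2 + c*Kt - (c+1)*k0) <> 0 ->
  (w*Z1^2 + c*Kt - (c+1)*k1) <> 0 ->
  (w*Z2^2 + c*Kt - (c+1)*k2) = 0 -> False.
Proof.
  intros Hc HZ0 HZ1 HZ0p HZ1p H01 Fx0 Fy0 Fx1 Fy1 Fx2 Fy2 N0 N1 L2.
  rewrite L2 in Fx2, Fy2.
  assert (Tx = 0) by lra. assert (Ty = 0) by lra.
  assert (x0 = 0). { assert ((w*Z0^2 + c*Kt - (c+1)*k0)*x0 = 0) by lra.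
    destruct (Rmult_integral _ _ H1); [contradiction|assumption]. }
  assert (y0 = 0). { assert ((w*Z0^2 + c*Kt - (c+1)*k0)*y0 = 0) by lra.
    destruct (Rmult_integral _ _ H2); [contradiction|assumption]. }
  assert (x1 = 0). { assert ((w*Z1^2 + c*Kt - (c+1)*k1)*x1 = 0) by lra.
    destruct (Rmult_integral _ _ H3); [contradiction|assumption]. }
  assert (y1 = 0). { assert ((w*Z1^2 + c*Kt - (c+1)*k1)*y1 = 0) by lra.
    destruct (Rmult_integral _ _ H4); [contradiction|assumption]. }
  subst x0 y0 x1 y1.
  assert (Z0 = 1) by nra. assert (Z1 = 1) by nra. subst. lra.
Qed.

Lemma caseC (x0 y0 Z0 x1 y1 Z1 x2 y2 Z2 k0 k1 k2 w c Tx Ty Kt : R) :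
  c < -1 ->
  Z0^2 = x0^2 + y0^2 + 1 -> Z1^2 = x1^2 + y1^2 + 1 -> Z2^2 = x2^2 + y2^2 + 1 ->
  c = x0*x1 + y0*y1 - Z0*Z1 ->
  c = x0*x2 + y0*y2 - Z0*Z2 ->
  c = x1*x2 + y1*y2 - Z1*Z2 ->
  Tx = -(w*Z0^2 + c*Kt - (c+1)*k0)*x0 ->
  Ty = -(w*Z0^2 + c*Kt - (c+1)*k0)*y0 ->
  Tx = -(w*Z1^2 + c*Kt - (c+1)*k1)*x1 ->
  Ty = -(w*Z1^2 + c*Kt - (c+1)*k1)*y1 ->
  Tx = -(w*Z2^2 + c*Kt - (c+1)*k2)*x2 ->
  Ty = -(w*Z2^2 + c*Kt - (c+1)*k2)*y2 ->
  (w*Z0^2 + c*Kt - (c+1)*k0) <> 0 ->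
  (w*Z1^2 + c*Kt - (c+1)*k1) <> 0 ->
  (w*Z2^2 + c*Kt - (c+1)*k2) <> 0 -> False.
Proof.
  intros Hc HZ0 HZ1 HZ2 H01 H02 H12 Fx0 Fy0 Fx1 Fy1 Fx2 Fy2 N0 N1 N2.
  set (D := x0*(y1*Z2 - y2*Z1) - y0*(x1*Z2 - x2*Z1) + Z0*(x1*y2 - x2*y1)).
  assert (HG : - D^2 =
    (x0*x0+y0*y0-Z0*Z0)*((x1*x1+y1*y1-Z1*Z1)*(x2*x2+y2*y2-Z2*Z2) - (x1*x2+y1*y2-Z1*Z2)^2)
    - (x0*x1+y0*y1-Z0*Z1)*((x0*x1+y0*y1-Z0*Z1)*(x2*x2+y2*y2-Z2*Z2) - (x1*x2+y1*y2-Z1*Z2)*(x0*x2+y0*y2-Z0*Z2))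
    + (x0*x2+y0*y2-Z0*Z2)*((x0*x1+y0*y1-Z0*Z1)*(x1*x2+y1*y2-Z1*Z2) - (x1*x1+y1*y1-Z1*Z1)*(x0*x2+y0*y2-Z0*Z2))).
  { unfold D. ring. }
  assert (E0 : x0*x0+y0*y0-Z0*Z0 = -1) by nra.
  assert (E1 : x1*x1+y1*y1-Z1*Z1 = -1) by nra.
  assert (E2 : x2*x2+y2*y2-Z2*Z2 = -1) by nra.
  rewrite E0, E1, E2, <- H01, <- H02, <- H12 in HG.
  assert (HD : D = 0).
  { set (L0 := w*Z0^2 + c*Kt - (c+1)*k0) in *.
    set (L1 := w*Z1^2 + c*Kt - (c+1)*k1) in *.
    set (L2 := w*Z2^2 + c*Kt - (c+1)*k2) in *.
    assert (x0 = -/L0*Tx) by (rewrite Fx0; field; auto).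
    assert (y0 = -/L0*Ty) by (rewrite Fy0; field; auto).
    assert (x1 = -/L1*Tx) by (rewrite Fx1; field; auto).
    assert (y1 = -/L1*Ty) by (rewrite Fy1; field; auto).
    assert (x2 = -/L2*Tx) by (rewrite Fx2; field; auto).
    assert (y2 = -/L2*Ty) by (rewrite Fy2; field; auto).
    unfold D. rewrite H, H0, H1, H2, H3, H4. ring. }
  rewrite HD in HG.
  assert (HH : (c+1)^2*(2*c-1) = 0) by (replace ((c+1)^2*(2*c-1)) with (-1 * (-1 * -1 - c ^ 2) - c * (c * -1 - c * c) + c * (c * c - -1 * c)) by ring; rewrite <- HG; ring).
  assert (0 < (c+1)^2) by (apply pow_lt; nra) || nra.
  nra.
Qed.

Lemma caseD (Z0 Z1 Z2 k0 k1 k2 w c Tz Kt : R) :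
  0 < w -> c < -1 ->
  Tz = (w - (w*Z0^2 + c*Kt - (c+1)*k0))*Z0 ->
  Tz = (w - (w*Z1^2 + c*Kt - (c+1)*k1))*Z1 ->
  Tz = (w - (w*Z2^2 + c*Kt - (c+1)*k2))*Z2 ->
  (w*Z0^2 + c*Kt - (c+1)*k0) = 0 ->
  (w*Z1^2 + c*Kt - (c+1)*k1) = 0 ->
  (w*Z2^2 + c*Kt - (c+1)*k2) = 0 ->
  Z0 = Z1 /\ Z1 = Z2 /\ k0 = k1 /\ k1 = k2.
Proof.
  intros Hw Hc F0 F1 F2 L0 L1 L2.
  rewrite L0 in F0. rewrite L1 in F1. rewrite L2 in F2.
  assert (Z0 = Z1) by nra. assert (Z1 = Z2) by nra. subst.
  split; [reflexivity|split;[reflexivity|]]. split; nra.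
Qed.

Lemma core_all (x0 y0 Z0 x1 y1 Z1 x2 y2 Z2 k0 k1 k2 w c : R) :
  0 < w -> 0 < k0 -> 0 < k1 -> 0 < k2 -> c < -1 ->
  Z0^2 = x0^2 + y0^2 + 1 -> Z1^2 = x1^2 + y1^2 + 1 -> Z2^2 = x2^2 + y2^2 + 1 ->
  0 < Z0 -> 0 < Z1 -> 0 < Z2 ->
  c = x0*x1 + y0*y1 - Z0*Z1 ->
  c = x0*x2 + y0*y2 - Z0*Z2 ->
  c = x1*x2 + y1*y2 - Z1*Z2 ->
  -w*x0 = k1*(x1 + c*x0) + k2*(x2 + c*x0) + w*(x0^2+y0^2)*x0 ->
  -w*y0 = k1*(y1 + c*y0) + k2*(y2 + c*y0) + w*(x0^2+y0^2)*y0 ->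
  0 = k1*(Z1 + c*Z0) + k2*(Z2 + c*Z0) + w*(x0^2+y0^2)*Z0 ->
  -w*x1 = k0*(x0 + c*x1) + k2*(x2 + c*x1) + w*(x1^2+y1^2)*x1 ->
  -w*y1 = k0*(y0 + c*y1) + k2*(y2 + c*y1) + w*(x1^2+y1^2)*y1 ->
  0 = k0*(Z0 + c*Z1) + k2*(Z2 + c*Z1) + w*(x1^2+y1^2)*Z1 ->
  -w*x2 = k0*(x0 + c*x2) + k1*(x1 + c*x2) + w*(x2^2+y2^2)*x2 ->
  -w*y2 = k0*(y0 + c*y2) + k1*(y1 + c*y2) + w*(x2^2+y2^2)*y2 ->
  0 = k0*(Z0 + c*Z2) + k1*(Z1 + c*Z2) + w*(x2^2+y2^2)*Z2 ->
  Z0 = Z1 /\ Z1 = Z2 /\ k0 = k1 /\ k1 = k2.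
Proof.
  intros Hw Hk0 Hk1 Hk2 Hc HZ0 HZ1 HZ2 HZ0p HZ1p HZ2p H01 H02 H12
    E0x E0y E0z E1x E1y E1z E2x E2y E2z.
  set (Tx := k0*x0 + k1*x1 + k2*x2).
  set (Ty := k0*y0 + k1*y1 + k2*y2).
  set (Tz := k0*Z0 + k1*Z1 + k2*Z2).
  set (Kt := k0 + k1 + k2).
  assert (Fx0 : Tx = -(w*Z0^2 + c*Kt - (c+1)*k0)*x0) by (rewrite HZ0; unfold Tx, Kt; lra).
  assert (Fy0 : Ty = -(w*Z0^2 + c*Kt - (c+1)*k0)*y0) by (rewrite HZ0; unfold Ty, Kt; lra).
  assert (Fz0 : Tz = (w - (w*Z0^2 + c*Kt - (c+1)*k0))*Z0) by (rewrite HZ0; unfold Tz, Kt; lra).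
  assert (Fx1 : Tx = -(w*Z1^2 + c*Kt - (c+1)*k1)*x1) by (rewrite HZ1; unfold Tx, Kt; lra).
  assert (Fy1 : Ty = -(w*Z1^2 + c*Kt - (c+1)*k1)*y1) by (rewrite HZ1; unfold Ty, Kt; lra).
  assert (Fz1 : Tz = (w - (w*Z1^2 + c*Kt - (c+1)*k1))*Z1) by (rewrite HZ1; unfold Tz, Kt; lra).
  assert (Fx2 : Tx = -(w*Z2^2 + c*Kt - (c+1)*k2)*x2) by (rewrite HZ2; unfold Tx, Kt; lra).
  assert (Fy2 : Ty = -(w*Z2^2 + c*Kt - (c+1)*k2)*y2) by (rewrite HZ2; unfold Ty, Kt; lra).
  assert (Fz2 : Tz = (w - (w*Z2^2 + c*Kt - (c+1)*k2))*Z2) by (rewrite HZ2; unfold Tz, Kt; lra).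
  assert (HTz : Tz = k0*Z0 + k1*Z1 + k2*Z2) by reflexivity.
  assert (HKt : Kt = k0 + k1 + k2) by reflexivity.
  clearbody Tx Ty Tz Kt.
  assert (HTz1 : Tz = k1*Z1 + k0*Z0 + k2*Z2) by lra.
  assert (HTz2 : Tz = k2*Z2 + k0*Z0 + k1*Z1) by lra.
  assert (HKt1 : Kt = k1 + k0 + k2) by lra.
  assert (HKt2 : Kt = k2 + k0 + k1) by lra.
  destruct (Req_dec (w*Z0^2 + c*Kt - (c+1)*k0) 0) as [L0|N0];
  destruct (Req_dec (w*Z1^2 + c*Kt - (c+1)*k1) 0) as [L1|N1];
  destruct (Req_dec (w*Z2^2 + c*Kt - (c+1)*k2) 0) as [L2|N2].
  - apply (caseD Z0 Z1 Z2 k0 k1 k2 w c Tz Kt); auto.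
  - exfalso. apply (caseA x2 y2 Z2 x0 y0 Z0 x1 y1 Z1 k2 k0 k1 w c Tx Ty Tz Kt); auto; lra.
  - exfalso. apply (caseA x1 y1 Z1 x0 y0 Z0 x2 y2 Z2 k1 k0 k2 w c Tx Ty Tz Kt); auto; lra.
  - exfalso. apply (caseB x1 y1 Z1 x2 y2 Z2 x0 y0 Z0 k1 k2 k0 w c Tx Ty Kt); auto.
  - exfalso. apply (caseA x0 y0 Z0 x1 y1 Z1 x2 y2 Z2 k0 k1 k2 w c Tx Ty Tz Kt); auto.
  - exfalso. apply (caseB x0 y0 Z0 x2 y2 Z2 x1 y1 Z1 k0 k2 k1 w c Tx Ty Kt); auto.
  - exfalso. apply (caseB x0 y0 Z0 x1 y1 Z1 x2 y2 Z2 k0 k1 k2 w c Tx Ty Kt); auto.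
  - exfalso. apply (caseC x0 y0 Z0 x1 y1 Z1 x2 y2 Z2 k0 k1 k2 w c Tx Ty Kt); auto.
Qed.

Lemma ldot_comm a b : ldot a b = ldot b a.
Proof. unfold ldot; ring. Qed.

Lemma ldot_neg u w : vz u ^2 = vx u ^2 + vy u ^2 + 1 -> 0 < vz u ->
  vz w ^2 = vx w ^2 + vy w ^2 + 1 -> 0 < vz w -> ldot u w < 0.
Proof.
  destruct u as [a b c], w as [d e f]; unfold ldot; simpl; intros H1 H2 H3 H4.
  assert (CS : (a*d+b*e)^2 <= (a^2+b^2)*(d^2+e^2)).
  { assert (0 <= (a*e-b*d)^2) by apply pow2_ge_0. nra. }
  assert ((a*d+b*e)^2 < (c*f)^2) by nra.
  assert (0 < c*f) by nra.
  destruct (Rlt_or_le (a*d+b*e) (c*f)) as [Hl|Hl]; [lra|].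
  assert ((c*f)^2 <= (a*d+b*e)^2) by (apply pow_incr; lra). lra.
Qed.

Lemma acosh_inj u w : 1 < u -> 1 < w -> acosh u = acosh w -> u = w.
Proof.
  unfold acosh; intros Hu Hw H.
  assert (Su := sqrt_pos (u*u-1)). assert (Sw := sqrt_pos (w*w-1)).
  apply ln_inv in H; try lra.
  destruct (Rtotal_order u w) as [Hlt|[Heq|Hgt]]; auto.
  - assert (sqrt (u*u-1) < sqrt (w*w-1)) by (apply sqrt_lt_1; nra). lra.
  - assert (sqrt (w*w-1) < sqrt (u*u-1)) by (apply sqrt_lt_1; nra). lra.
Qed.

Lemma pos_t om al rh i t : ere_pos om al rh i t =
  mkV (rh i * cos (om*t + al i)) (rh i * sin (om*t + al i)) (sqrt (rh i ^2 + 1)).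
Proof. reflexivity. Qed.

Lemma pos_sq om al rh i t : 0 <= rh i ->
  let p := ere_pos om al rh i t in vz p ^2 = vx p ^2 + vy p ^2 + 1 /\ 0 < vz p.
Proof.
  intros Hr p. unfold p, ere_pos; cbn [vx vy vz].
  assert (0 <= rh i ^2 + 1) by nra.
  rewrite <- Rsqr_pow2 at 1. rewrite Rsqr_sqrt by lra.
  split.
  - pose proof (sin2_cos2 (om*t + al i)). unfold Rsqr in H0. nra.
  - apply sqrt_lt_R0. nra.
Qed.

Lemma force3 m qs :
  let P (i j : nat) := m j / Rpower (ldot (qs i) (qs j) ^ 2 - 1) (3/2) in
  let T (i j : nat) := vadd (qs j) (vscale (ldot (qs i) (qs j)) (qs i)) in
  force 3 m qs 0 = vadd vzero (vadd (vscale (P 0%nat 1%nat) (T 0%nat 1%nat)) (vadd (vscale (P 0%nat 2%nat) (T 0%nat 2%nat)) vzero)) /\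
  force 3 m qs 1 = vadd (vscale (P 1%nat 0%nat) (T 1%nat 0%nat)) (vadd vzero (vadd (vscale (P 1%nat 2%nat) (T 1%nat 2%nat)) vzero)) /\
  force 3 m qs 2 = vadd (vscale (P 2%nat 0%nat) (T 2%nat 0%nat)) (vadd (vscale (P 2%nat 1%nat) (T 2%nat 1%nat)) (vadd vzero vzero)).
Proof. repeat split; reflexivity. Qed.

Ltac eqtac G0 := let G := fresh in pose proof G0 as G; unfold ldot in G; cbn [vx vy vz] in G;
  match goal with
  | X0 : vx ?p0 = _, Y0 : vy ?p0 = _, X1 : vx ?p1 = _, Y1 : vy ?p1 = _, X2 : vx ?p2 = _, Y2 : vy ?p2 = _ |- _ =>
    rewrite ?X0, ?Y0, ?X1, ?Y1, ?X2, ?Y2 in G; rewrite ?X0, ?Y0, ?X1, ?Y1, ?X2, ?Y2; lra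
  end.

Theorem mainTheorem15 (m : nat -> R) (omega : R) (alpha rho : nat -> R) :
  0 < m 0%nat -> 0 < m 1%nat -> 0 < m 2%nat ->
  omega <> 0 ->
  0 <= rho 0%nat -> 0 <= rho 1%nat -> 0 <= rho 2%nat ->
  nbody_solution 3 m (ere_pos omega alpha rho) ->
  (forall t,
     hdist (ere_pos omega alpha rho 0 t) (ere_pos omega alpha rho 1 t)
       = hdist (ere_pos omega alpha rho 0 t) (ere_pos omega alpha rho 2 t) /\
     hdist (ere_pos omega alpha rho 1 t) (ere_pos omega alpha rho 2 t)
       = hdist (ere_pos omega alpha rho 0 t) (ere_pos omega alpha rho 1 t)) ->
  sqrt (rho 0%nat ^ 2 + 1) = sqrt (rho 1%nat ^ 2 + 1) /\
  sqrt (rho 1%nat ^ 2 + 1) = sqrt (rho 2%nat ^ 2 + 1) /\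
  m 0%nat = m 1%nat /\ m 1%nat = m 2%nat.
Proof.
  intros Hm0 Hm1 Hm2 Hom Hr0 Hr1 Hr2 Hsol Hdist.
  destruct Hsol as [v [a [Hd [_ [Hcol Heq]]]]].
  destruct (Hd 0%nat ltac:(lia)) as [Hv0 Ha0].
  destruct (Hd 1%nat ltac:(lia)) as [Hv1 Ha1].
  destruct (Hd 2%nat ltac:(lia)) as [Hv2 Ha2].
  pose proof (Heq 0 0%nat ltac:(lia)) as Q0.
  pose proof (Heq 0 1%nat ltac:(lia)) as Q1.
  pose proof (Heq 0 2%nat ltac:(lia)) as Q2.
  destruct (force3 m (fun k => ere_pos omega alpha rho k 0)) as [F0 [F1 F2]].
  rewrite F0 in Q0. rewrite F1 in Q1. rewrite F2 in Q2. clear F0 F1 F2.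
  rewrite (ere_acc _ _ _ _ _ _ Hv0 Ha0), (ere_vel _ _ _ _ _ Hv0) in Q0.
  rewrite (ere_acc _ _ _ _ _ _ Hv1 Ha1), (ere_vel _ _ _ _ _ Hv1) in Q1.
  rewrite (ere_acc _ _ _ _ _ _ Hv2 Ha2), (ere_vel _ _ _ _ _ Hv2) in Q2.
  cbv beta in Q0, Q1, Q2.
  destruct (pos_sq omega alpha rho 0 0 Hr0) as [S0 P0].
  destruct (pos_sq omega alpha rho 1 0 Hr1) as [S1 P1].
  destruct (pos_sq omega alpha rho 2 0 Hr2) as [S2 P2].
  pose proof (Hcol 0 0%nat 1%nat ltac:(lia) ltac:(lia) ltac:(lia)) as C01.
  pose proof (Hcol 0 0%nat 2%nat ltac:(lia) ltac:(lia) ltac:(lia)) as C02.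
  pose proof (Hcol 0 1%nat 2%nat ltac:(lia) ltac:(lia) ltac:(lia)) as C12.
  destruct (Hdist 0) as [D1 D2].
  set (p0 := ere_pos omega alpha rho 0 0) in *.
  set (p1 := ere_pos omega alpha rho 1 0) in *.
  set (p2 := ere_pos omega alpha rho 2 0) in *.
  pose proof (ldot_neg p0 p1 S0 P0 S1 P1).
  pose proof (ldot_neg p0 p2 S0 P0 S2 P2).
  pose proof (ldot_neg p1 p2 S1 P1 S2 P2).
  assert (L01 : ldot p0 p1 < -1) by nra.
  assert (L02 : ldot p0 p2 < -1) by nra.
  assert (L12 : ldot p1 p2 < -1) by nra.
  unfold hdist in D1, D2.
  apply acosh_inj in D1; [|lra|lra]. apply acosh_inj in D2; [|lra|lra].
  set (c := ldot p0 p1) in *.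
  assert (E02 : ldot p0 p2 = c) by lra.
  assert (E12 : ldot p1 p2 = c) by lra.
  assert (E10 : ldot p1 p0 = c) by (rewrite ldot_comm; reflexivity).
  assert (E20 : ldot p2 p0 = c) by (rewrite ldot_comm; lra).
  assert (E21 : ldot p2 p1 = c) by (rewrite ldot_comm; lra).
  rewrite E02 in Q0. rewrite E10, E12 in Q1. rewrite E20, E21 in Q2.
  set (Qp := Rpower (c ^ 2 - 1) (3 / 2)) in *.
  assert (HQ : 0 < Qp) by (unfold Qp, Rpower; apply exp_pos).
  pose proof (f_equal vx Q0) as G0x. pose proof (f_equal vy Q0) as G0y. pose proof (f_equal vz Q0) as G0z.
  pose proof (f_equal vx Q1) as G1x. pose proof (f_equal vy Q1) as G1y. pose proof (f_equal vz Q1) as G1z.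
  pose proof (f_equal vx Q2) as G2x. pose proof (f_equal vy Q2) as G2y. pose proof (f_equal vz Q2) as G2z.
  clear Q0 Q1 Q2.
  cbn [vx vy vz vadd vscale vzero ldot] in G0x, G0y, G0z, G1x, G1y, G1z, G2x, G2y, G2z.
  assert (X0 : vx p0 = rho 0%nat * cos (omega * 0 + alpha 0%nat)) by reflexivity.
  assert (Y0 : vy p0 = rho 0%nat * sin (omega * 0 + alpha 0%nat)) by reflexivity.
  assert (X1 : vx p1 = rho 1%nat * cos (omega * 0 + alpha 1%nat)) by reflexivity.
  assert (Y1 : vy p1 = rho 1%nat * sin (omega * 0 + alpha 1%nat)) by reflexivity.
  assert (X2 : vx p2 = rho 2%nat * cos (omega * 0 + alpha 2%nat)) by reflexivity.
  assert (Y2 : vy p2 = rho 2%nat * sin (omega * 0 + alpha 2%nat)) by reflexivity.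
  assert (Hc01 : c = vx p0 * vx p1 + vy p0 * vy p1 - vz p0 * vz p1) by reflexivity.
  assert (Hc02 : c = vx p0 * vx p2 + vy p0 * vy p2 - vz p0 * vz p2) by (rewrite <- E02; reflexivity).
  assert (Hc12 : c = vx p1 * vx p2 + vy p1 * vy p2 - vz p1 * vz p2) by (rewrite <- E12; reflexivity).
  assert (Hw : 0 < omega * omega) by (apply Rsqr_pos_lt; exact Hom).
  destruct (core_all (vx p0) (vy p0) (vz p0) (vx p1) (vy p1) (vz p1) (vx p2) (vy p2) (vz p2)
     (m 0%nat / Qp) (m 1%nat / Qp) (m 2%nat / Qp) (omega*omega) c) as [Z01 [Z12 [K01 K12]]];
  try assumption; try (apply Rdiv_lt_0_compat; assumption);
  [ idtac ..].
  all: try (first [ solve [eqtac G0x] | solve [eqtac G0y] | solve [eqtac G0z]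
                  | solve [eqtac G1x] | solve [eqtac G1y] | solve [eqtac G1z]
                  | solve [eqtac G2x] | solve [eqtac G2y] | solve [eqtac G2z] ]).
  split; [exact Z01|]. split; [exact Z12|].
  assert (HQn : Qp <> 0) by lra.
  split.
  - replace (m 0%nat) with (m 0%nat / Qp * Qp) by (field; exact HQn).
    rewrite K01. field; exact HQn.
  - replace (m 1%nat) with (m 1%nat / Qp * Qp) by (field; exact HQn).
    rewrite K12. field; exact HQn.
Qed.
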